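(* Let $L\ge 2$, let $\Omega\subsetneq\mathbb{Z}_L$ with $|\Omega|=n$, and let $\mathcal{C}=\{C_0,\dots,C_{M-1}\}$ be a set of $M$ complex sequences of length $L$ such that every $C_j$ satisfies the spectral constraint: its frequency-domain dual $\widehat{C}_j=(\hat c_{j,0},\dots,\hat c_{j,L-1})$ satisfies $|\hat c_{j,k}|^2=\frac{L}{L-n}$ for $k\notin\Omega$ and $\hat c_{j,k}=0$ for $k\in\Omega$. Define $\theta_a=\max\{|\theta_{C_i}(\tau)|:0\le i<M,\ 0<\tau<L\}$ and, when $M\ge 2$, $\theta_c=\max\{|\theta_{C_i,C_j}(\tau)|:0\le i\ne j<M,\ 0\le\tau<L\}$. Then $$\theta_a\ge L\sqrt{\frac{n}{(L-n)(L-1)}},\qquad \theta_c\ge \frac{L}{\sqrt{L-n}}.$$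
   Context: $\omega_L=e^{2\pi\sqrt{-1}/L}$. For a length-$L$ sequence $C=(c_0,\dots,c_{L-1})$ its frequency-domain dual is $\widehat C=(\hat c_0,\dots,\hat c_{L-1})$ with $\hat c_k=\frac{1}{\sqrt L}\sum_{t=0}^{L-1}c_t\omega_L^{-tk}$. The periodic cross-correlation of length-$L$ sequences $C,D$ is $\theta_{C,D}(\tau)=\sum_{t=0}^{L-1}c_t d^*_{\langle t+\tau\rangle_L}$, where $\langle\cdot\rangle_L$ is reduction mod $L$ and $^*$ is complex conjugation; $\theta_C=\theta_{C,C}$. *)

(* Defs.v *)
From HB Require Import structures.
From mathcomp Require Import all_boot all_order all_algebra.
From mathcomp Require Import all_classical all_reals.
From mathcomp Require Import trigo.
From mathcomp Require Import complex.
Set Implicit Arguments. Unset Strict Implicit. Unset Printing Implicit Defensive.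
Import Order.TTheory GRing.Theory Num.Theory.
Local Open Scope ring_scope.
Local Open Scope complex_scope.

Section Defs.
Variable R : realType.

Definition omegaL (L : nat) : R[i] :=
  (cos (2 * pi / L%:R)) +i* (sin (2 * pi / L%:R)).

Definition seq_at (L : nat) (c : 'I_L -> R[i]) (m : nat) : R[i] :=
  match insub (m %% L)%N : option 'I_L with
  | Some i => c i | None => 0 end.

Definition dft (L : nat) (c : 'I_L -> R[i]) (k : 'I_L) : R[i] :=
  ((Num.sqrt (L%:R : R))^-1)%:C * \sum_(t < L) c t * (omegaL L) ^- (t * k).

Definition xcorr (L : nat) (c d : 'I_L -> R[i]) (tau : nat) : R[i] :=
  \sum_(t < L) c t * Num.conj (seq_at d (t + tau)).

Definition theta_a (L M : nat) (C : 'I_M -> 'I_L -> R[i]) : R :=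
  \big[Num.max/0]_(i < M) \big[Num.max/0]_(tau < L | (0 < tau)%N)
     ComplexField.Normc.normc (xcorr (C i) (C i) tau).

Definition theta_c (L M : nat) (C : 'I_M -> 'I_L -> R[i]) : R :=
  \big[Num.max/0]_(i < M) \big[Num.max/0]_(j < M | i != j)
     \big[Num.max/0]_(tau < L) ComplexField.Normc.normc (xcorr (C i) (C j) tau).

Definition spectral_constraint (L : nat) (Om : {set 'I_L}) (c : 'I_L -> R[i]) : Prop :=
  forall k : 'I_L,
    (k \in Om -> dft c k = 0) /\
    (k \notin Om -> ComplexField.Normc.normc (dft c k) ^+ 2 = L%:R / (L%:R - #|Om|%:R)).
End Defs.

(* Main.v *)
Require Import Defs.
From HB Require Import structures.
From mathcomp Require Import all_boot all_order all_algebra.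
From mathcomp Require Import all_classical all_reals.
From mathcomp Require Import complex trigo.
From mathcomp Require Import lra ring.
Import Order.TTheory GRing.Theory Num.Theory.
Local Open Scope ring_scope.
Local Open Scope complex_scope.
Section S. Variable R : realType.
Lemma cos_ne1 (x : R) : 0 < x < pi *+ 2 -> cos x != 1.
Proof.
move=> /andP[x0 x2].
have h : cos x = 1 - 2 * sin (x/2) ^+ 2.
  have e2 : x = x/2 + x/2 by field.
  rewrite [in LHS]e2 cosD -!expr2 cos2sin2; ring.
have pi2 : pi *+ 2 = 2 * pi :> R by rewrite mulr_natl.
have s : 0 < sin (x/2) by apply: sin_gt0_pi; apply/andP; split; lra.
rewrite h; apply/eqP => e.
have : sin (x/2) ^+ 2 = 0 by lra.
move/eqP; rewrite expf_eq0 /=; lra.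
Qed.
Lemma omega_pow (L m : nat) : omegaL R L ^+ m =
  cos (m%:R * (2*pi/L%:R)) +i* sin (m%:R * (2*pi/L%:R)).
Proof.
rewrite /omegaL; set a := 2*pi/L%:R.
elim: m => [|m IH]; first by rewrite expr0 !mul0r cos0 sin0.
rewrite exprS IH -(addn1 m) natrD mulrDl mul1r cosD sinD.
simpc. congr (_ +i* _); lra.
Qed.

Lemma omega_prim L : (0 < L)%N -> L.-primitive_root (omegaL R L).
Proof.
move=> L0; apply/andP; split=>//; apply/forallP => i; apply/eqP.
rewrite unity_rootE omega_pow.
have Lp : (0 : R) < L%:R by rewrite ltr0n.
have pi0 := pi_gt0 R.
have [->|ne] := eqVneq i.+1 L; rewrite ?eqxx ?(negbTE ne).
  have -> : L%:R * (2 * pi / L%:R) = pi *+ 2 :> R.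
    by rewrite mulr_natl; field; rewrite pnatr_eq0 -lt0n.
  by rewrite cos2pi sin2pi eqxx.
apply/negbTE; rewrite eq_complex /= negb_and; apply/orP; left.
apply: cos_ne1.
have lt : (i.+1%:R : R) < L%:R.
  by rewrite ltr_nat ltn_neqAle ne (ltn_ord i).
have ip : (0 : R) < i.+1%:R by rewrite ltr0n.
have pi2 : pi *+ 2 = 2 * pi :> R by rewrite mulr_natl.
rewrite pi2; apply/andP; split.
  by apply: mulr_gt0 => //; apply: mulr_gt0; [lra | rewrite invr_gt0].
rewrite mulrA ltr_pdivrMr //.
have -> : 2 * pi * L%:R = i.+1%:R * (2 * pi) + (L%:R - i.+1%:R) * (2 * pi) :> R by ring.
rewrite ltrDl; apply: mulr_gt0; lra.
Qed.
End S.
Section Alg.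
Variable R : realType.
Variable L : nat.
Variable w : R[i].
Hypothesis L0 : (0 < L)%N.
Hypothesis wp : L.-primitive_root w.
Hypothesis wn : w * Num.conj w = 1.

Lemma wnX m : w ^+ m * Num.conj (w ^+ m) = 1.
Proof. by rewrite rmorphXn -exprMn wn expr1n. Qed.

Lemma conjwX m : Num.conj (w ^+ m) = (w ^+ m)^-1.
Proof.
have h := wnX m.
have nz : w ^+ m != 0 by apply/eqP => e; move: h; rewrite e mul0r => /eqP; rewrite eq_sym oner_eq0.
by rewrite -[LHS]mul1r -(mulVf nz) -mulrA h mulr1.
Qed.

Lemma orth (i j : 'I_L) :
  \sum_(t < L) w ^+ (t * i) * Num.conj (w ^+ (t * j)) = if i == j then L%:R else 0.
Proof.
set z := w ^+ i * Num.conj (w ^+ j).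
have -> : \sum_(t < L) w ^+ (t * i) * Num.conj (w ^+ (t * j)) = \sum_(t < L) z ^+ t.
  by apply: eq_bigr => t _; rewrite /z exprMn -rmorphXn -!exprM mulnC (mulnC t).
have [e|ne] := eqVneq i j.
  by rewrite /z e wnX; under eq_bigr do rewrite expr1n; rewrite sumr_const card_ord.
have z1 : z != 1.
  apply/eqP => e.
  have : w ^+ i = w ^+ j.
    by rewrite -[LHS]mulr1 -(wnX j) [w ^+ j * _]mulrC mulrA -/z e mul1r.
  move/eqP; rewrite (eq_prim_root_expr wp) !modn_small ?ltn_ord //.
  by move=> /eqP e1; apply: (negP ne); apply/eqP; apply: val_inj.
have zL : z ^+ L = 1.
  by rewrite /z exprMn -rmorphXn -!exprM mulnC (mulnC j) !exprM (prim_expr_order wp) !expr1n rmorph1 mulr1.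
have := subrX1 z L; rewrite zL subrr => /esym /eqP; rewrite mulf_eq0 subr_eq0 (negbTE z1) /=.
by move/eqP.
Qed.
Hypothesis wdef : omegaL R L = w.
Let sc : R[i] := ((Num.sqrt (L%:R : R))^-1)%:C.

Lemma sc2 : sc * sc * L%:R = 1.
Proof.
have -> : (L%:R : R[i]) = (L%:R : R)%:C by rewrite rmorph_nat.
rewrite /sc -!rmorphM.
have Lp : (0 : R) < L%:R by rewrite ltr0n.
have sp : 0 < Num.sqrt (L%:R : R) by rewrite sqrtr_gt0.
rewrite -invfM -expr2 sqr_sqrtr ?ltW // mulVf ?rmorph1 //; lra.
Qed.

Lemma dftE (c : 'I_L -> R[i]) k : dft c k = sc * \sum_(t < L) c t * Num.conj (w ^+ (t * k)).
Proof. by rewrite /dft wdef; congr (_ * _); apply: eq_bigr => t _; rewrite conjwX. Qed.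

Lemma inv_dft (c : 'I_L -> R[i]) t : c t = sc * \sum_(k < L) dft c k * w ^+ (t * k).
Proof.
under eq_bigr do rewrite dftE.
have -> : \sum_(k < L) (sc * \sum_(u < L) c u * Num.conj (w ^+ (u * k))) * w ^+ (t * k)
   = sc * \sum_(u < L) c u * \sum_(k < L) w ^+ (k * t) * Num.conj (w ^+ (k * u)).
  under eq_bigr do rewrite mulr_sumr mulr_suml.
  rewrite exchange_big mulr_sumr; apply: eq_bigr => u _.
  rewrite mulr_sumr mulr_sumr; apply: eq_bigr => k _.
  rewrite (mulnC k t) (mulnC k u); ring.
under eq_bigr do rewrite orth.
rewrite (bigD1 t) //= eqxx big1 ?addr0; last first.
  by move=> u /negbTE; rewrite eq_sym => ->; rewrite mulr0.
by transitivity (c t * (sc * sc * L%:R)); [rewrite sc2 mulr1 | ring].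
Qed.
Lemma seq_atE (d : 'I_L -> R[i]) m :
  seq_at d m = sc * \sum_(l < L) dft d l * w ^+ (m * l).
Proof.
rewrite /seq_at (insubT (fun x => x < L)%N (ltn_pmod m L0)) /= inv_dft.
congr (_ * _); apply: eq_bigr => l _ /=.
by rewrite exprM (prim_expr_mod wp) -exprM.
Qed.

Lemma conj_sc : Num.conj sc = sc.
Proof. exact: conjc_real. Qed.

Lemma xcorrE (c d : 'I_L -> R[i]) tau :
  xcorr c d tau = \sum_(l < L) dft c l * Num.conj (dft d l) * Num.conj (w ^+ (tau * l)).
Proof.
rewrite /xcorr.
under eq_bigr do rewrite seq_atE rmorphM /= conj_sc rmorph_sum.
transitivity (\sum_(t < L) \sum_(l < L) c t * (sc * (Num.conj (dft d l) *
     (Num.conj (w ^+ (t * l)) * Num.conj (w ^+ (tau * l)))))).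
  apply: eq_bigr => t _; rewrite !mulr_sumr; apply: eq_bigr => l _.
  by rewrite !rmorphM /= mulnDl exprD rmorphM.
rewrite exchange_big; apply: eq_bigr => l _; rewrite (dftE c).
rewrite mulr_sumr !mulr_suml; apply: eq_bigr => t _; ring.
Qed.
Lemma parseval (c d : 'I_L -> R[i]) :
  \sum_(tau < L) xcorr c d tau * Num.conj (xcorr c d tau) =
  L%:R * \sum_(l < L) (dft c l * Num.conj (dft d l)) * Num.conj (dft c l * Num.conj (dft d l)).
Proof.
set a := fun l => dft c l * Num.conj (dft d l).
transitivity (\sum_(tau < L) \sum_(k < L) \sum_(l < L)
   a k * Num.conj (a l) * (w ^+ (tau * l) * Num.conj (w ^+ (tau * k)))).
  apply: eq_bigr => tau _; rewrite xcorrE rmorph_sum mulr_suml; apply: eq_bigr => k _.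
  rewrite mulr_sumr; apply: eq_bigr => l _; rewrite /a !rmorphM /= !conjCK; ring.
rewrite exchange_big /= mulr_sumr; apply: eq_bigr => k _.
rewrite exchange_big /=.
under eq_bigr do rewrite -mulr_sumr orth.
rewrite (bigD1 k) //= eqxx big1 ?addr0; first by rewrite mulrC.
by move=> u /negbTE ->; rewrite mulr0.
Qed.
End Alg.
Section T. Variable R : realType.
Lemma le_bmax (I : finType) (P : pred I) (F : I -> R) i : P i -> F i <= \big[Num.max/0]_(j | P j) F j.
Proof. by move=> Pi; rewrite (bigmaxD1 i) // le_max lexx. Qed.
Lemma bmax_ge0 (I : finType) (P : pred I) (F : I -> R) : 0 <= \big[Num.max/0]_(j | P j) F j.
Proof. by apply/bigmax_geP; left. Qed.
Lemma sqrt_bound (a x t : R) : 0 <= a -> 0 <= x -> 0 <= t -> a^+2 * x <= t^+2 -> a * Num.sqrt x <= t.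
Proof.
move=> a0 x0 t0 h.
have -> : a * Num.sqrt x = Num.sqrt (a^+2 * x) by rewrite sqrtrM ?sqr_ge0 // sqrtr_sqr ger0_norm.
by apply: le_trans (ler_wsqrtr h) _; rewrite sqrtr_sqr ger0_norm.
Qed.
Lemma normc_ge0 (x : R[i]) : 0 <= ComplexField.Normc.normc x.
Proof. by case: x => a b; exact: sqrtr_ge0. Qed.
Lemma sq_normc (x : R[i]) : x * Num.conj x = ((ComplexField.Normc.normc x)^+2)%:C.
Proof. by rewrite rmorphXn -sqr_normc. Qed.
Lemma omega_norm L : omegaL R L * Num.conj (omegaL R L) = 1.
Proof. rewrite /omegaL; set a := 2*pi/L%:R. change (cos a +i* sin a * (cos a -i* sin a) = 1). simpc. by rewrite -!expr2 cos2Dsin2 /=; congr (_ +i* _); ring. Qed.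
Lemma split0 L (L0 : (0 < L)%N) (F : 'I_L -> R) : \sum_(t < L) F t = F (Ordinal L0) + \sum_(t < L | (0 < t)%N) F t.
Proof.
rewrite (bigD1 (Ordinal L0)) //=; congr (_ + _); apply: eq_bigl => t.
by rewrite lt0n; congr negb; apply/eqP/eqP => [->|/(congr1 val)] //= e; apply: val_inj.
Qed.
End T.
Section M. Variable R : realType.
Lemma spec_term L (Om : {set 'I_L}) (c : 'I_L -> R[i]) k : spectral_constraint Om c ->
  dft c k * Num.conj (dft c k) = if k \notin Om then (L%:R / (L%:R - #|Om|%:R))%:C else 0.
Proof.
move=> h; have [h1 h2] := h k.
case: (boolP (k \in Om)) => kin /=; first by rewrite h1 // mul0r.
by rewrite sq_normc h2.
Qed.

Lemma conj_pair (x y : R[i]) : x * Num.conj y * Num.conj (x * Num.conj y) = (x * Num.conj x) * (y * Num.conj y).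
Proof. by rewrite rmorphM /= conjCK; ring. Qed.

Lemma energy L (Om : {set 'I_L}) (c d : 'I_L -> R[i]) (L0 : (0 < L)%N) :
  spectral_constraint Om c -> spectral_constraint Om d ->
  \sum_(tau < L) ComplexField.Normc.normc (xcorr c d tau) ^+ 2 =
  L%:R * ((L%:R / (L%:R - #|Om|%:R)) ^+ 2 * (#|~: Om|%:R)).
Proof.
move=> hc hd; apply: (@complexI R).
rewrite rmorph_sum /=.
under eq_bigr do rewrite -sq_normc.
rewrite (@parseval R L _ L0 (@omega_prim R L L0) (@omega_norm R L) erefl).
under eq_bigr => k _ do rewrite conj_pair (spec_term _ _ _ k hc) (spec_term _ _ _ k hd).
set Q := L%:R / (L%:R - #|Om|%:R).
transitivity (L%:R * \sum_(k in ~: Om) (Q^+2)%:C).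
  congr (_ * _); rewrite [in RHS]big_mkcond; apply: eq_bigr => k _; rewrite finset.in_setC.
  case: (k \in Om) => /=; first by rewrite mul0r; reflexivity.
  by rewrite expr2; exact: (esym (rmorphM _ Q Q)).
rewrite big_const iter_addr addr0 -mulr_natr; clearbody Q.
rewrite !rmorphM !rmorph_nat mul1r mulr_natr; reflexivity.
Qed.
Lemma conjR (x : R) : Num.conj (x%:C) = x%:C.
Proof. exact: conjc_real. Qed.

Lemma sum_spec L (Om : {set 'I_L}) (x : R) :
  \sum_(k < L) (if k \notin Om then x%:C else 0) = (x * #|~: Om|%:R)%:C.
Proof.
transitivity (\sum_(k in ~: Om) x%:C).
  rewrite [in RHS]big_mkcond; apply: eq_bigr => k _; rewrite finset.in_setC; reflexivity.
rewrite big_const iter_addr addr0 rmorphM rmorph_nat mulr_natr; reflexivity.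
Qed.

Lemma cardC_R L (Om : {set 'I_L}) : (#|~: Om|%:R : R) = L%:R - #|Om|%:R.
Proof.
have h := cardsC Om; rewrite card_ord in h.
have h' : (L%:R : R) = #|Om|%:R + #|~: Om|%:R by rewrite -natrD h.
by rewrite h'; ring.
Qed.

Lemma zero_lag L (Om : {set 'I_L}) (c : 'I_L -> R[i]) (L0 : (0 < L)%N) :
  (#|Om| < L)%N -> spectral_constraint Om c ->
  ComplexField.Normc.normc (xcorr c c 0) ^+ 2 = L%:R ^+ 2.
Proof.
move=> nL hc; apply: (@complexI R).
rewrite -sq_normc (@xcorrE R L _ L0 (@omega_prim R L L0) (@omega_norm R L) erefl c c 0).
under eq_bigr => k _ do rewrite mul0n expr0 rmorph1 mulr1 (spec_term _ _ _ k hc).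
rewrite sum_spec conjR cardC_R.
have Np : (L%:R : R) - #|Om|%:R != 0 by rewrite subr_eq0 eqr_nat gtn_eqF.
by rewrite divfK // expr2 rmorphM.
Qed.
End M.

Theorem theorem1 (R : realType) (L M : nat) (Om : {set 'I_L})
    (C : 'I_M -> 'I_L -> R[i]) :
  (2 <= L)%N ->
  Om != [set: 'I_L] ->
  (0 < M)%N ->
  injective C ->
  (forall j : 'I_M, spectral_constraint Om (C j)) ->
  L%:R * Num.sqrt (#|Om|%:R / ((L%:R - #|Om|%:R) * (L%:R - 1))) <= theta_a C
  /\ ((2 <= M)%N -> L%:R / Num.sqrt (L%:R - #|Om|%:R) <= theta_c C).
Proof.
move=> L2 OmT M0 _ hC.
have L0 : (0 < L)%N by apply: leq_trans L2.
have nL : (#|Om| < L)%N.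
  have := @proper_card _ Om [set: 'I_L]; rewrite properT OmT cardsT card_ord; apply; done.
have E := fun i j : 'I_M => @energy R L Om (C i) (C j) L0 (hC i) (hC j).
have Lr : (1 : R) < L%:R by rewrite ltr1n.
have Nr : (0 : R) < L%:R - #|Om|%:R by rewrite subr_gt0 ltr_nat.
have nr : (0 : R) <= #|Om|%:R by rewrite ler0n.
have sq2 : forall x y : R, 0 <= x -> x <= y -> x ^+ 2 <= y ^+ 2.
  by move=> x y x0 xy; rewrite !expr2; apply: ler_pM.
set N := L%:R - #|Om|%:R in Nr E *.
have NE : N = L%:R - #|Om|%:R by [].
clearbody N.
split.
- set i0 := Ordinal M0.
  set T := theta_a C.
  have T0 : 0 <= T by apply: bmax_ge0.
  have E0 := E i0 i0; rewrite (@cardC_R R L Om) -/N (@split0 R L L0) /= (@zero_lag R L Om (C i0) L0 nL (hC i0)) in E0.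
  have B : \sum_(t < L | (0 < t)%N) ComplexField.Normc.normc (xcorr (C i0) (C i0) t) ^+ 2
           <= \sum_(t < L | (0 < t)%N) T ^+ 2.
    apply: ler_sum => t t0; apply: sq2; first exact: normc_ge0.
    apply: le_trans (@le_bmax R _ (fun tau : 'I_L => (0 < tau)%N) (fun tau => ComplexField.Normc.normc (xcorr (C i0) (C i0) tau)) t t0) _.
    exact: (@le_bmax R _ xpredT (fun i => \big[Num.max/0]_(tau < L | (0 < tau)%N)
       ComplexField.Normc.normc (xcorr (C i) (C i) tau)) i0 isT).
  have K : \sum_(t < L | (0 < t)%N) T ^+ 2 = (L%:R - 1) * T ^+ 2.
    have := @split0 R L L0 (fun _ => T ^+ 2); rewrite sumr_const card_ord => h.
    apply: (addrI (T ^+ 2)); rewrite -h -mulr_natr; ring.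
  rewrite K in B.
  apply: sqrt_bound; [lra| |exact: T0|].
    by apply: divr_ge0 => //; apply: mulr_ge0; lra.
  have -> : L%:R ^+ 2 * (#|Om|%:R / (N * (L%:R - 1))) = (L%:R * ((L%:R / N) ^+ 2 * N) - L%:R ^+ 2) / (L%:R - 1).
    rewrite NE; field; apply/andP; split; apply/negP => /eqP ?; lra.
  rewrite ler_pdivrMr; last lra.
  rewrite -NE in E0; lra.
- move=> M2.
  set i0 := Ordinal M0. set j0 := Ordinal M2.
  set T := theta_c C.
  have T0 : 0 <= T by apply: bmax_ge0.
  have E0 := E i0 j0; rewrite (@cardC_R R L Om) -/N in E0.
  have B : \sum_(t < L) ComplexField.Normc.normc (xcorr (C i0) (C j0) t) ^+ 2
           <= \sum_(t < L) T ^+ 2.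
    apply: ler_sum => t _; apply: sq2; first exact: normc_ge0.
    have h1 := (@le_bmax R 'I_L xpredT (fun tau => ComplexField.Normc.normc (xcorr (C i0) (C j0) tau)) t isT).
    have h2 := (@le_bmax R 'I_M (fun j => i0 != j) (fun j => \big[Num.max/0]_(tau < L)
       ComplexField.Normc.normc (xcorr (C i0) (C j) tau)) j0 isT).
    have h3 := (@le_bmax R 'I_M xpredT (fun i => \big[Num.max/0]_(j < M | i != j) \big[Num.max/0]_(tau < L)
       ComplexField.Normc.normc (xcorr (C i) (C j) tau)) i0 isT).
    exact: (le_trans h1 (le_trans h2 h3)).
  rewrite sumr_const card_ord -mulr_natr E0 in B.
  have -> : L%:R / Num.sqrt N = L%:R * Num.sqrt (N^-1) by rewrite sqrtrV // ltW.
  apply: sqrt_bound; [lra| |exact: T0|].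
    by rewrite invr_ge0 ltW.
  have Lp : (0 : R) < L%:R by lra.
  rewrite -(ler_pM2l Lp).
  rewrite -NE in B.
  have e : L%:R * (L%:R ^+ 2 / N) = L%:R * ((L%:R / N) ^+ 2 * N).
    by field; apply/negP => /eqP ?; lra.
  rewrite e; rewrite [T ^+ 2 * _]mulrC in B; exact: B.
Qed.
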